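(* Let $\mathfrak{A}$ be an architecture, $\Sigma$ a finite alphabet and $k\ge1$. There is a deterministic bottom-up tree automaton $\mathcal{A}^{k\text{-stw}}_{\mathsf{acyclic}}$ with $2^{\mathcal{O}(k^2)}$ states which accepts all binary trees $\tau$ such that $\tau$ is a $k$-STT and $G_\tau$ is acyclic.
   Context: Architecture $\mathfrak{A}=(\mathsf{Procs},\mathsf{DS},\mathsf{Writer},\mathsf{Reader})$ with finite sets of processes and data structures. Edge labels are $\Gamma=\{\to\}\cup\mathsf{DS}$ and vertex labels are pairs in $\Sigma\times\mathsf{Procs}$. For $k\ge1$, $k$-STTs are $\tau::=(i,a,p)\mid\mathsf{Add}^\gamma_{i,j}\tau\mid\mathsf{Forget}_i\tau\mid\tau\oplus\tau$ with $a\in\Sigma,p\in\mathsf{Procs},\gamma\in\Gamma,i,j\in[k]$. Semantics $[\![\tau]\!]=(G_\tau,\chi_\tau)$, $G_\tau$ a labelled graph and $\chi_\tau:[k]\to V$ partial injective: $(i,a,p)$ is one vertex labelled $(a,p)$ colored $i$; $\mathsf{Add}^\gamma_{i,j}$ adds the edge $(\chi(i),\chi(j))$ with label $\gamma$ if $i,j\in\mathrm{dom}(\chi)$ (nothing otherwise); $\mathsf{Forget}_i$ removes $i$ from $\mathrm{dom}(\chi)$; $\tau_1\oplus\tau_2$ is the disjoint union, defined (i.e. the term is a legal $k$-STT) only if the color domains are disjoint. Terms are regarded as binary trees over the alphabet $\{\oplus,(i,a,p),\mathsf{Add}^\gamma_{i,j},\mathsf{Forget}_i\}$ (leaves atomic,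 unary nodes $\mathsf{Add}/\mathsf{Forget}$, binary nodes $\oplus$). $G_\tau$ is acyclic if the union of all its edge relations has no cycle. The size of a tree automaton is its number of states. *)

(* Defs.v *)
From mathcomp Require Import all_boot.
Set Implicit Arguments. Unset Strict Implicit. Unset Printing Implicit Defensive.

Record architecture := Architecture {
  Procs : finType;
  DS : finType;
  Writer : DS -> Procs;
  Reader : DS -> Procs }.

(* Edge labels Gamma = {->} u DS : None encodes the process order ->. *)
Definition Gamma (A : architecture) : finType := option (DS A).

(* Binary trees over the alphabet {oplus, (i,a,p), Add^g_{i,j}, Forget_i},
   colors i, j in [k] = 'I_k.  These are all the trees the automaton reads;
   the k-STTs are those satisfying [stt_legal]. *)
Inductive stt_tree (A : architecture) (Sigma : finType) (k : nat) : Type :=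
| STLeaf : 'I_k -> Sigma -> Procs A -> stt_tree A Sigma k
| STAdd : Gamma A -> 'I_k -> 'I_k -> stt_tree A Sigma k -> stt_tree A Sigma k
| STForget : 'I_k -> stt_tree A Sigma k -> stt_tree A Sigma k
| STPlus : stt_tree A Sigma k -> stt_tree A Sigma k -> stt_tree A Sigma k.

Section Semantics.
Variables (A : architecture) (Sigma : finType) (k : nat).
Local Notation tree := (stt_tree A Sigma k).

(* Semantics [[tau]] = (G_tau, chi_tau): vertices are 0 .. nv-1. *)
Fixpoint stt_nv (t : tree) : nat :=
  match t with
  | STLeaf _ _ _ => 1
  | STAdd _ _ _ t' => stt_nv t'
  | STForget _ t' => stt_nv t'
  | STPlus t1 t2 => stt_nv t1 + stt_nv t2
  end.

Fixpoint stt_vlab (t : tree) : seq (Sigma * Procs A) :=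
  match t with
  | STLeaf _ a p => [:: (a, p)]
  | STAdd _ _ _ t' => stt_vlab t'
  | STForget _ t' => stt_vlab t'
  | STPlus t1 t2 => stt_vlab t1 ++ stt_vlab t2
  end.

Fixpoint stt_chi (t : tree) : 'I_k -> option nat :=
  match t with
  | STLeaf i _ _ => fun c => if c == i then Some 0 else None
  | STAdd _ _ _ t' => stt_chi t'
  | STForget i t' => fun c => if c == i then None else stt_chi t' c
  | STPlus t1 t2 => fun c =>
      match stt_chi t1 c with
      | Some u => Some u
      | None => omap (addn (stt_nv t1)) (stt_chi t2 c)
      end
  end.

Fixpoint stt_edges (t : tree) : seq (nat * Gamma A * nat) :=
  match t with
  | STLeaf _ _ _ => [::]
  | STAdd g i j t' =>
      match stt_chi t' i, stt_chi t' j with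
      | Some u, Some v => (u, g, v) :: stt_edges t'
      | _, _ => stt_edges t'
      end
  | STForget _ t' => stt_edges t'
  | STPlus t1 t2 =>
      stt_edges t1 ++
      [seq (x.1.1 + stt_nv t1, x.1.2, x.2 + stt_nv t1) | x <- stt_edges t2]
  end.

(* legality: tau1 (+) tau2 is defined only if color domains are disjoint *)
Fixpoint stt_legal (t : tree) : bool :=
  match t with
  | STLeaf _ _ _ => true
  | STAdd _ _ _ t' => stt_legal t'
  | STForget _ t' => stt_legal t'
  | STPlus t1 t2 =>
      [&& stt_legal t1, stt_legal t2 &
          [forall c : 'I_k, (stt_chi t1 c == None) || (stt_chi t2 c == None)]]
  end.

Definition stt_edge_rel (t : tree) : rel nat :=
  fun u v => has (fun x => (x.1.1 == u) && (x.2 == v)) (stt_edges t).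

Definition stt_acyclic (t : tree) : Prop :=
  ~ exists (u : nat) (p : seq nat),
      [/\ p != [::], path (stt_edge_rel t) u p & last u p = u].

End Semantics.

Record dbta (A : architecture) (Sigma : finType) (k : nat) (Q : finType) :=
  DBTA {
  d_leaf : 'I_k -> Sigma -> Procs A -> Q;
  d_add : Gamma A -> 'I_k -> 'I_k -> Q -> Q;
  d_forget : 'I_k -> Q -> Q;
  d_plus : Q -> Q -> Q;
  d_final : pred Q }.

Fixpoint dbta_run A Sigma k Q (M : dbta A Sigma k Q) (t : stt_tree A Sigma k)
  : Q :=
  match t with
  | STLeaf i a p => d_leaf M i a p
  | STAdd g i j t' => d_add M g i j (dbta_run M t')
  | STForget i t' => d_forget M i (dbta_run M t')
  | STPlus t1 t2 => d_plus M (dbta_run M t1) (dbta_run M t2)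
  end.

Definition dbta_accepts A Sigma k Q (M : dbta A Sigma k Q) t : bool :=
  d_final M (dbta_run M t).

(* Main.v *)
Require Import Defs.
From mathcomp Require Import all_boot.
From mathcomp Require Import zify.
Set Implicit Arguments. Unset Strict Implicit.

Inductive tc (e : rel nat) : nat -> nat -> Prop :=
| tc1 x y : e x y -> tc e x y
| tcS x y z : tc e x y -> e y z -> tc e x z.

Lemma tc_trans e x y z : tc e x y -> tc e y z -> tc e x z.
Proof.
move=> H1 H2; elim: H2 H1 => [u v E H1|u v w _ IH E H1];
  [exact: tcS H1 E | exact: tcS (IH H1) E].
Qed.

Lemma tc_mono (e e' : rel nat) f x y :
  (forall u v, e u v -> e' (f u) (f v)) -> tc e x y -> tc e' (f x) (f y).
Proof.
move=> Hf; elim => [u v E|u v w _ IH E]; [apply: tc1; exact: Hf|].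
apply: tcS IH _; exact: Hf.
Qed.

Lemma path_tc e p u : path e u p -> p != [::] -> tc e u (last u p).
Proof.
elim: p u => [|y p IH] u //= /andP[Euy Hp] _.
case: p IH Hp => [|z p] IH Hp /=; first exact: tc1.
exact (tc_trans (tc1 Euy) (IH y Hp isT)).
Qed.

Lemma tc_path e x y : tc e x y -> exists p, [/\ p != [::], path e x p & last x p = y].
Proof.
elim => [u v E|u v w _ [p [Hp Hpa Hl]] E].
  by exists [:: v]; rewrite /= E.
exists (rcons p w); split; first by case: (p).
  by rewrite rcons_path Hpa Hl E.
by rewrite last_rcons.
Qed.

Section S.
Variables (A : architecture) (Sigma : finType) (k : nat).
Notation tree := (stt_tree A Sigma k).

Definition acyc (t : tree) := forall x, ~ tc (stt_edge_rel t) x x.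

Lemma acycE t : stt_acyclic t <-> acyc t.
Proof.
split.
  move=> H x Hx; apply: H; have [p [? ? ?]] := tc_path Hx; by exists x, p.
move=> H [u [p [Hp Hpa Hl]]]; apply: (H u); have := path_tc Hpa Hp; by rewrite Hl.
Qed.

Lemma chi_bound (t : tree) c x : stt_chi t c = Some x -> x < stt_nv t.
Proof.
elim: t c x => [i a p|g i j t IH|i t IH|t1 IH1 t2 IH2] c x /=.
- by case: (c == i) => // [[<-]].
- exact: IH.
- case: (c == i) => //; exact: IH.
- case E1: (stt_chi t1 c) => [u|].
    by move=> [<-]; have := IH1 _ _ E1; lia.
  case E2: (stt_chi t2 c) => [v|] //= [<-]; have := IH2 _ _ E2; lia.
Qed.

Lemma edge_bound (t : tree) e : e \in stt_edges t -> e.1.1 < stt_nv t /\ e.2 < stt_nv t.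
Proof.
elim: t e => [i a p|g i j t IH|i t IH|t1 IH1 t2 IH2] e /=.
- by [].
- case E1: (stt_chi t i) => [u|]; case E2: (stt_chi t j) => [v|]; try exact: IH.
  rewrite in_cons => /orP [/eqP -> /=|]; last exact: IH.
  split; [exact: chi_bound E1|exact: chi_bound E2].
- exact: IH.
- rewrite mem_cat => /orP [/IH1 [H1 H2]| /mapP [e' /IH2 [H1 H2] ->] /=].
    by split; apply: ltn_addr.
  by split; rewrite [_ + stt_nv t1]addnC ltn_add2l.
Qed.

Lemma rel_bound (t : tree) x y : stt_edge_rel t x y -> x < stt_nv t /\ y < stt_nv t.
Proof.
move/hasP => [[[a g] b] /edge_bound [? ?]] /= /andP [/eqP <- /eqP <-]; by split.
Qed.

Lemma tc_src (t : tree) x y : tc (stt_edge_rel t) x y -> x < stt_nv t /\ y < stt_nv t.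
Proof.
elim => [u v /rel_bound //|u v w _ [? ?] /rel_bound [? ?]]; by split.
Qed.

Lemma rel_plus (t1 t2 : tree) x y : stt_edge_rel (STPlus t1 t2) x y =
  stt_edge_rel t1 x y || has (fun e => (e.1.1 + stt_nv t1 == x) && (e.2 + stt_nv t1 == y)) (stt_edges t2).
Proof. by rewrite /stt_edge_rel /= has_cat has_map. Qed.

Lemma rel_plus1 (t1 t2 : tree) x y : stt_edge_rel t1 x y -> stt_edge_rel (STPlus t1 t2) x y.
Proof. by rewrite rel_plus => ->. Qed.

Lemma rel_plus2 (t1 t2 : tree) x y : stt_edge_rel t2 x y ->
  stt_edge_rel (STPlus t1 t2) (x + stt_nv t1) (y + stt_nv t1).
Proof.
rewrite rel_plus => /hasP [e He /andP [/eqP <- /eqP <-]]; apply/orP; right.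
apply/hasP; exists e => //=; by rewrite !eqxx.
Qed.

Lemma rel_plusE (t1 t2 : tree) x y : stt_edge_rel (STPlus t1 t2) x y ->
  stt_edge_rel t1 x y \/ exists x' y', [/\ x = x' + stt_nv t1, y = y' + stt_nv t1 & stt_edge_rel t2 x' y'].
Proof.
rewrite rel_plus => /orP [H|/hasP [e He /andP [/eqP <- /eqP <-]]]; first by left.
right; exists e.1.1, e.2; split => //; apply/hasP; exists e => //; by rewrite !eqxx.
Qed.

Lemma tc_plusE (t1 t2 : tree) x y : tc (stt_edge_rel (STPlus t1 t2)) x y ->
  (tc (stt_edge_rel t1) x y /\ y < stt_nv t1) \/
  exists x' y', [/\ x = x' + stt_nv t1, y = y' + stt_nv t1 & tc (stt_edge_rel t2) x' y'].
Proof.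
elim => [u v E|u v w _ IH E].
- case: (rel_plusE E) => [H|[x' [y' [-> -> H]]]].
    left; split; [exact: tc1 | exact: (rel_bound H).2].
  right; exists x', y'; split => //; exact: tc1.
- case: IH => [[H Hv]|[x' [y' [-> Hv H]]]]; case: (rel_plusE E) => [H'|[a [b [Ha -> H']]]].
  + left; split; [exact: tcS H H' | exact: (rel_bound H').2].
  + exfalso; lia.
  + exfalso; have := (rel_bound H').1; lia.
  + right; exists x', b; split => //; have ea : a = y' by lia.
    subst a; exact: tcS H H'.
Qed.

Lemma chi_inj (t : tree) a b x : stt_chi t a = Some x -> stt_chi t b = Some x -> a = b.
Proof.
elim: t a b x => [i s p|g i j t IH|i t IH|t1 IH1 t2 IH2] a b x /=.
- by case: (a =P i) => [->|] //; case: (b =P i) => [->|].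
- exact: IH.
- case: (a == i) => //; case: (b == i) => //; exact: IH.
- case E1a: (stt_chi t1 a) => [u|]; case E1b: (stt_chi t1 b) => [v|].
  + move=> [<-] [Ev]; apply: IH1 E1a _; by rewrite E1b Ev.
  + move=> [Eu]; case E2b: (stt_chi t2 b) => [w|] //= [Ew].
    have := chi_bound E1a; lia.
  + case E2a: (stt_chi t2 a) => [w|] //= [Ew] [Eu].
    have := chi_bound E1b; lia.
  + case E2a: (stt_chi t2 a) => [w|] //=; case E2b: (stt_chi t2 b) => [w'|] //= [Ew] [Ew'].
    apply: IH2 E2a _; rewrite E2b; congr Some; lia.
Qed.

Lemma tc_sub (e e' : rel nat) x y : (forall u v, e u v -> e' u v) -> tc e x y -> tc e' x y.
Proof. move=> H; exact: (tc_mono (f := id)). Qed.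

Lemma tc_edge (e : rel nat) x y : tc e x y -> exists u v, e u v.
Proof. by elim => [u v E|u v w _ _ E]; [exists u, v|exists v, w]. Qed.

Definition stc (e : rel nat) x y := x = y \/ tc e x y.

Lemma stc_trans (e : rel nat) x y z : stc e x y -> stc e y z -> stc e x z.
Proof.
case=> [->//|H1] [<-|H2]; right => //; exact: tc_trans H1 H2.
Qed.

Lemma rel_add_sub g i j (t : tree) x y : stt_edge_rel t x y -> stt_edge_rel (STAdd g i j t) x y.
Proof.
rewrite /stt_edge_rel /=; case: (stt_chi t i) => [u|] //; case: (stt_chi t j) => [v|] //= ->.
by rewrite orbT.
Qed.

Lemma rel_addE g i j (t : tree) u v x y : stt_chi t i = Some u -> stt_chi t j = Some v ->
  stt_edge_rel (STAdd g i j t) x y = ((u == x) && (v == y)) || stt_edge_rel t x y.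
Proof. by rewrite /stt_edge_rel /= => -> ->. Qed.

Lemma tc_addE g i j (t : tree) u v x y : stt_chi t i = Some u -> stt_chi t j = Some v ->
  tc (stt_edge_rel (STAdd g i j t)) x y ->
  tc (stt_edge_rel t) x y \/ (stc (stt_edge_rel t) x u /\ stc (stt_edge_rel t) v y).
Proof.
move=> Ei Ej; elim => [a b E|a b c _ IH E]; rewrite (rel_addE _ _ _ Ei Ej) in E.
  case/orP: E => [/andP [/eqP -> /eqP ->]|E]; [right; split; left => // | left; exact: tc1].
case/orP: E => [/andP [/eqP Eb /eqP Ec]|E].
  subst; case: IH => [H|[H1 H2]]; right; split => //; try (by left); by right.
case: IH => [H|[H1 H2]]; first by left; exact: tcS H E.
right; split => //; apply: stc_trans H2 _; right; exact: tc1.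
Qed.

Lemma tc_add_build g i j (t : tree) u v x y : stt_chi t i = Some u -> stt_chi t j = Some v ->
  stc (stt_edge_rel t) x u -> stc (stt_edge_rel t) v y -> tc (stt_edge_rel (STAdd g i j t)) x y.
Proof.
move=> Ei Ej Hx Hy.
have Euv : tc (stt_edge_rel (STAdd g i j t)) u v.
  by apply: tc1; rewrite (rel_addE _ _ _ Ei Ej) !eqxx.
have Hs : forall a b, tc (stt_edge_rel t) a b -> tc (stt_edge_rel (STAdd g i j t)) a b.
  by move=> a b; apply: tc_sub => ? ?; exact: rel_add_sub.
case: Hx => [->|Hx]; case: Hy => [<-|Hy] //.
- exact: tc_trans Euv (Hs _ _ Hy).
- exact: tc_trans (Hs _ _ Hx) Euv.
- exact: tc_trans (tc_trans (Hs _ _ Hx) Euv) (Hs _ _ Hy).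
Qed.

Definition Q := option ({set 'I_k} * {set 'I_k * 'I_k}).

Definition add_tr (g : Gamma A) (i j : 'I_k) (s : Q) : Q :=
  match s with
  | None => None
  | Some (D, R) =>
    if (i \in D) && (j \in D) then
      if (j == i) || ((j, i) \in R) then None
      else Some (D, R :|: [set ab | ((ab.1 == i) || ((ab.1, i) \in R)) &&
                                     ((j == ab.2) || ((j, ab.2) \in R))])
    else Some (D, R)
  end.

Definition forget_tr (i : 'I_k) (s : Q) : Q :=
  match s with
  | None => None
  | Some (D, R) => Some (D :\ i, [set ab | (ab \in R) && (ab.1 != i) && (ab.2 != i)])
  end.

Definition plus_tr (s1 s2 : Q) : Q :=
  match s1, s2 with
  | Some (D1, R1), Some (D2, R2) =>
    if D1 :&: D2 == set0 then Some (D1 :|: D2, R1 :|: R2) else None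
  | _, _ => None
  end.

Definition M : dbta A Sigma k Q :=
  DBTA (fun i _ _ => Some ([set i], set0)) add_tr forget_tr plus_tr
       (fun s => s != None).

Definition Inv (t : tree) (s : Q) : Prop :=
  match s with
  | None => ~ (stt_legal t /\ acyc t)
  | Some (D, R) =>
    [/\ stt_legal t, acyc t, (forall c, (c \in D) = (stt_chi t c != None)) &
        (forall a b, (a, b) \in R <-> exists x y,
           [/\ stt_chi t a = Some x, stt_chi t b = Some y & tc (stt_edge_rel t) x y])]
  end.

Lemma Inv_run t : Inv t (dbta_run M t).
Proof.
elim: t => [i s p|g i j t IH|i t IH|t1 IH1 t2 IH2].
- rewrite /Inv /=; split => //.
  + by move=> x /tc_edge [u [v]].
  + by move=> c; rewrite inE; case: (c == i).
  + by move=> a b; rewrite inE; split => // -[x [y [_ _ /tc_edge [u [v]]]]].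
- have -> : dbta_run M (STAdd g i j t) = add_tr g i j (dbta_run M t) by [].
  have chiA : stt_chi (STAdd g i j t) = stt_chi t by [].
  move: IH; case: (dbta_run M t) => [[D R]|] IH; last first.
    move=> [Hl Ha]; apply: IH; split => // x Hx; apply: (Ha x).
    by apply: tc_sub Hx => ? ?; exact: rel_add_sub.
  case: IH => Hl Ha HD HR; rewrite /add_tr.
  case Hij: ((i \in D) && (j \in D)); last first.
    have Er : stt_edge_rel (STAdd g i j t) = stt_edge_rel t.
      rewrite /stt_edge_rel /=; case Ei: (stt_chi t i) => [u|] //.
      case Ej: (stt_chi t j) => [v|] //; move: Hij; by rewrite !HD Ei Ej.
    by rewrite /Inv /acyc Er chiA.
  move/andP: Hij => [Hi Hj]; rewrite !HD in Hi Hj.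
  case Ei: (stt_chi t i) Hi => [u|] // _; case Ej: (stt_chi t j) Hj => [v|] // _.
  case S: ((j == i) || ((j, i) \in R)).
    move=> [_ Hac]; apply: (Hac u).
    have Euv : tc (stt_edge_rel (STAdd g i j t)) u v.
      by apply: tc1; rewrite (rel_addE _ _ _ Ei Ej) !eqxx.
    case/orP: S => [/eqP Eji|/HR [x [y [Ex Ey Hxy]]]].
      by move: Ej; rewrite {1}Eji Ei => -[Evu]; subst v.
    rewrite Ej in Ex; rewrite Ei in Ey; case: Ex => Ex; case: Ey => Ey; subst x y.
    apply: tc_trans Euv _; apply: tc_sub Hxy => ? ?; exact: rel_add_sub.
  rewrite /Inv chiA; split => //.
  + move=> x /(tc_addE Ei Ej) [/Ha //|[Hxu Hvx]].
    case: (stc_trans Hvx Hxu) => [Evu|Hvu].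
      by move: S; rewrite (chi_inj Ej (_ : stt_chi t i = Some v)) ?eqxx // Ei Evu.
    have HjR : (j, i) \in R by apply/HR; exists v, u.
    by move: S; rewrite HjR orbT.
  + move=> a b; rewrite !inE /=; split.
    * case/orP => [/HR [x [y [Ex Ey Hxy]]]| /andP [Sa Sb]].
        exists x, y; split => //; apply: tc_sub Hxy => ? ?; exact: rel_add_sub.
      have [x [Ex Hx]] : exists x, stt_chi t a = Some x /\ stc (stt_edge_rel t) x u.
        case/orP: Sa => [/eqP ->|/HR [x [y [Ex Ey H]]]].
          by exists u; split => //; left.
        by exists x; split => //; right; move: Ey; rewrite Ei => -[->].
      have [y [Ey Hy]] : exists y, stt_chi t b = Some y /\ stc (stt_edge_rel t) v y.
        case/orP: Sb => [/eqP <-|/HR [x' [y [Ex' Ey H]]]].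
          by exists v; split => //; left.
        by exists y; split => //; right; move: Ex'; rewrite Ej => -[->].
      by exists x, y; split => //; exact: tc_add_build Ei Ej Hx Hy.
    * move=> [x [y [Ex Ey /(tc_addE Ei Ej) [H|[Hxu Hvy]]]]].
        by apply/orP; left; apply/HR; exists x, y.
      apply/orP; right; apply/andP; split.
        case: Hxu => [Exu|H].
          by apply/orP; left; apply/eqP; apply: chi_inj Ex _; rewrite Ei Exu.
        by apply/orP; right; apply/HR; exists x, u.
      case: Hvy => [Evy|H].
        by apply/orP; left; apply/eqP; apply: chi_inj Ej _; rewrite Ey Evy.
      by apply/orP; right; apply/HR; exists v, y.
- have -> : dbta_run M (STForget i t) = forget_tr i (dbta_run M t) by [].
  have chiF c : stt_chi (STForget i t) c = if c == i then None else stt_chi t c by [].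
  move: IH; case: (dbta_run M t) => [[D R]|] IH; last exact: IH.
  case: IH => Hl Ha HD HR; rewrite /forget_tr /Inv; split => //.
  + by move=> c; rewrite !inE chiF; case: (c == i) => //=.
  + move=> a b; rewrite !inE /= ?chiF; split.
      case/andP => [/andP [/HR [x [y [Ex Ey H]]] Hai] Hbi].
      by exists x, y; rewrite (negbTE Hai) (negbTE Hbi).
    move=> [x [y []]]; case: (a == i) => //; case: (b == i) => // Ex Ey H /=; rewrite !andbT; apply/HR; by exists x, y.
- have -> : dbta_run M (STPlus t1 t2) = plus_tr (dbta_run M t1) (dbta_run M t2) by [].
  have chiP c : stt_chi (STPlus t1 t2) c = match stt_chi t1 c with
      | Some u => Some u | None => omap (addn (stt_nv t1)) (stt_chi t2 c) end by [].
  have HN1 : ~ (stt_legal t1 /\ acyc t1) -> Inv (STPlus t1 t2) None.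
    move=> H1 [Hl Ha]; apply: H1; split; first by case/and3P: Hl.
    move=> x H; apply: (Ha x); apply: tc_sub H => ? ?; exact: rel_plus1.
  have HN2 : ~ (stt_legal t2 /\ acyc t2) -> Inv (STPlus t1 t2) None.
    move=> H1 [Hl Ha]; apply: H1; split; first by case/and3P: Hl.
    move=> x H; apply: (Ha (x + stt_nv t1)).
    exact: (tc_mono (f := fun z => z + stt_nv t1)) (@rel_plus2 t1 t2) H.
  move: IH1 IH2; case: (dbta_run M t1) => [[D1 R1]|] IH1; last by move=> _; exact: HN1.
  case: (dbta_run M t2) => [[D2 R2]|] IH2; last by case: (D1, R1) => ? ?; exact: HN2.
  case: IH1 => Hl1 Ha1 HD1 HR1; case: IH2 => Hl2 Ha2 HD2 HR2; rewrite /plus_tr.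
  case H: (D1 :&: D2 == set0); last first.
    move=> [/= /and3P [_ _ /forallP Hc] _]; move/negbT: H => /negP; apply.
    apply/eqP/setP => c; rewrite !inE HD1 HD2; have := Hc c.
    by case: (stt_chi t1 c) => [?|]; case: (stt_chi t2 c) => [?|].
  have Hdis c : stt_chi t1 c != None -> stt_chi t2 c = None.
    move=> Hc; have : c \notin D1 :&: D2 by rewrite (eqP H) inE.
    by rewrite inE HD1 HD2 Hc /= negbK => /eqP.
  have Hdis2 c : stt_chi t2 c != None -> stt_chi t1 c = None.
    move=> Hc; have : c \notin D1 :&: D2 by rewrite (eqP H) inE.
    by rewrite inE HD1 HD2 Hc andbT negbK => /eqP.
  rewrite /Inv; split.
  + rewrite /= Hl1 Hl2 /=; apply/forallP => c.
    case E: (stt_chi t1 c) => [u|] //=; by rewrite Hdis // E.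
  + move=> x /tc_plusE [[Hx _]|[x' [y' [Ex Ey Hx]]]]; first exact: Ha1 Hx.
    have e : x' = y' by lia.
    subst; exact: Ha2 Hx.
  + move=> c; rewrite inE HD1 HD2 chiP.
    by case: (stt_chi t1 c) => //=; case: (stt_chi t2 c).
  + move=> a b; rewrite inE; split.
    * case/orP => [/HR1 [x [y [Ex Ey Hxy]]]|/HR2 [x [y [Ex Ey Hxy]]]].
        exists x, y; rewrite !chiP Ex Ey; split => //.
        apply: tc_sub Hxy => ? ?; exact: rel_plus1.
      exists (stt_nv t1 + x), (stt_nv t1 + y).
      have Ea1 : stt_chi t1 a = None by apply: Hdis2; rewrite Ex.
      have Eb1 : stt_chi t1 b = None by apply: Hdis2; rewrite Ey.
      rewrite !chiP Ea1 Eb1 /= Ex Ey; split => //.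
      rewrite ![stt_nv t1 + _]addnC.
      exact: (tc_mono (f := fun z => z + stt_nv t1)) (@rel_plus2 t1 t2) Hxy.
    * move=> [x [y [Ex Ey Hxy]]]; rewrite !chiP in Ex Ey.
      case E1a: (stt_chi t1 a) Ex => [xa|] Ex; case E1b: (stt_chi t1 b) Ey => [yb|] Ey.
      - case: Ex => Ex; case: Ey => Ey; subst xa yb.
        case/tc_plusE: Hxy => [[Hxy _]|[x' [y' [Ex' _ _]]]].
          by apply/orP; left; apply/HR1; exists x, y.
        exfalso; have := chi_bound E1a; lia.
      - case: Ex => Ex; subst xa.
        case E2b: (stt_chi t2 b) Ey => [y2|] //= [Ey].
        case/tc_plusE: Hxy => [[_ Hy]|[x' [y' [Ex' _ _]]]]; first lia.
        exfalso; have := chi_bound E1a; lia.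
      - exfalso; case: Ey => Ey; subst yb.
        case E2a: (stt_chi t2 a) Ex => [x2|] //= [Ex].
        case/tc_plusE: Hxy => [[Hxy _]|[x' [y' [_ Ey' _]]]].
          have := (tc_src Hxy).1; lia.
        have := chi_bound E1b; lia.
      - case E2a: (stt_chi t2 a) Ex => [x2|] //= [Ex].
        case E2b: (stt_chi t2 b) Ey => [y2|] //= [Ey].
        case/tc_plusE: Hxy => [[Hxy _]|[x' [y' [Ex' Ey' Hxy]]]].
          exfalso; have := (tc_src Hxy).1; lia.
        have ex : x' = x2 by lia.
        have ey : y' = y2 by lia.
        subst x' y'; apply/orP; right; apply/HR2; by exists x2, y2.
Qed.

End S.

Theorem mainTheorem9 :
  forall (A : architecture) (Sigma : finType),
  exists c : nat,
  forall k : nat, 0 < k ->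
  exists (Q : finType) (M : dbta A Sigma k Q),
    #|Q| <= 2 ^ (c * k ^ 2) /\
    forall t : stt_tree A Sigma k,
      dbta_accepts M t <-> (stt_legal t /\ stt_acyclic t).
Proof.
move=> A Sigma; exists 3 => k k0.
exists (Q k), (M A Sigma k); split.
  have cs (T : finType) : #|{: {set T}}| = 2 ^ #|T|.
    by have := card_powerset [set: T]; rewrite powersetT !cardsT.
  rewrite card_option card_prod !cs card_prod card_ord -expnD.
  apply: (@leq_trans (2 ^ (k + k * k).+1)).
    by rewrite expnS; have := expn_gt0 2 (k + k * k); lia.
  apply: leq_pexp2l => //; nia.
move=> t; rewrite acycE /dbta_accepts.
have := Inv_run t; case: (dbta_run _ t) => [[D R]|] /=.
  by case=> ? ? _ _.
by move=> H; split => // ?; apply: H.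
Qed.
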